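(* Let $X$ be a scalar random variable with unknown distribution $\pi$ and an upper bound $u_b \in \mathbb{R}$ such that $\mathbb{P}_{\pi}[X \leq u_b] = 1$. Let $x_1,\dots,x_N$ be $N$ independent samples of $X$, and let $\zeta^*_N$ be the solution of the program $\min_{\zeta \in \mathbb{R}} \zeta$ subject to $\zeta \geq x_i$ for all $i=1,\dots,N$ (i.e. $\zeta^*_N = \max_{1\le k\le N} x_k$). Then for every $\epsilon \in [0,1]$, \[ \mathbb{P}^N_{\pi}\left[\mathbb{E}_{\pi}[X] \leq \zeta^*_N(1-\epsilon) + u_b\epsilon\right] \geq 1-(1-\epsilon)^N . \]
   Context: $\mathbb{P}^N_{\pi}$ denotes the $N$-fold product probability measure governing the i.i.d. sample $(x_1,\dots,x_N)$ drawn from $\pi$. *)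

(* Defs.v *)
From HB Require Import structures.
From mathcomp Require Import all_boot all_order all_algebra.
From mathcomp Require Import all_classical all_reals all_analysis.
Set Implicit Arguments. Unset Strict Implicit. Unset Printing Implicit Defensive.
Import Order.TTheory GRing.Theory Num.Theory.
Local Open Scope classical_set_scope.
Local Open Scope ring_scope.

(* Mutual independence of the finite family of real random variables
   (X i)_{i < N} on the probability space (Omega, P): for every family of
   Borel sets B_i, P(/\_i {X i in B i}) = prod_i P{X i in B i}.
   (Choosing B_i = setT recovers every finite subfamily.) *)
Definition mutually_independent_RVs d (Omega : measurableType d) (R : realType)
  (P : probability Omega R) (N : nat) (X : 'I_N -> Omega -> R) : Prop :=
  forall B : 'I_N -> set R, (forall i, measurable (B i)) ->
    P [set w | forall i, B i (X i w)] = (\prod_(i < N) P (X i @^-1` B i))%E.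

Definition has_law d (Omega : measurableType d) (R : realType)
  (P : probability Omega R) (X : Omega -> R) (pi : probability R R) : Prop :=
  forall B : set R, measurable B -> P (X @^-1` B) = pi B.

(* Main.v *)
Require Import Defs.
From HB Require Import structures.
From mathcomp Require Import all_boot all_order all_algebra.
From mathcomp Require Import all_classical all_reals all_analysis.
From mathcomp Require Import measurable_realfun.
From mathcomp Require Import lra zify.
Import Order.TTheory GRing.Theory Num.Theory.
Local Open Scope classical_set_scope.
Local Open Scope ring_scope.
Local Open Scope ereal_scope.

Lemma mle (R : realType) (a : R) : measurable [set y : R | (y <= a)%R].
Proof.
rewrite (_ : [set y : R | (y <= a)%R] = `]-oo, a]%classic); first exact: measurable_itv.
by apply/seteqP; split => y /=; rewrite in_itv.
Qed.

Lemma mlt (R : realType) (a : R) : measurable [set y : R | (a < y)%R].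
Proof.
rewrite (_ : [set y : R | (a < y)%R] = `]a, +oo[%classic); first exact: measurable_itv.
by apply/seteqP; split => y /=; rewrite in_itv /= andbT.
Qed.

Lemma gt_ub0 (R : realType) (pi : probability R R) (u_b : R) :
  pi [set y : R | (y <= u_b)%R] = 1 -> pi [set y : R | (u_b < y)%R] = 0.
Proof.
move=> h.
rewrite (_ : [set y : R | (u_b < y)%R] = ~` [set y : R | (y <= u_b)%R]).
  by rewrite probability_setC ?h ?subee //; exact: mle.
by apply/seteqP; split => y /=; rewrite ltNge =>/negP.
Qed.
Lemma int_le_ae d (T : measurableType d) (R : realType) (mu : {measure set T -> \bar R})
  (f g : T -> \bar R) : measurable_fun [set: T] f -> measurable_fun [set: T] g ->
  {ae mu, forall x, [set: T] x -> (f x <= g x)%E} ->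
  (\int[mu]_x f x <= \int[mu]_x g x)%E.
Proof.
move=> mf mg fg.
rewrite (integralE _ _ f) (integralE _ _ g).
apply: leeB.
- apply: ae_ge0_le_integral => //.
  + exact: measurable_funepos.
  + exact: measurable_funepos.
  move: fg; apply: filterS => x h _; rewrite !funeposE.
  by rewrite le_max2 ?h.
- apply: ae_ge0_le_integral => //.
  + exact: measurable_funeneg.
  + exact: measurable_funeneg.
  move: fg; apply: filterS => x h _; rewrite !funenegE.
  by rewrite le_max2 ?leeN2 ?h.
Qed.

Lemma claimC (R : realType) (pi : probability R R) (u_b eps z : R) :
  pi [set y : R | (y <= u_b)%R] = 1 -> (0 <= eps)%R -> (eps <= 1)%R ->
  pi [set y | (z < y)%R] <= eps%:E ->
  \int[pi]_y y%:E <= (z * (1 - eps) + u_b * eps)%:E.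
Proof.
move=> hub e0 e1 hz.
have pub := @gt_ub0 R pi u_b hub.
have mid : measurable_fun [set: R] (fun y : R => y%:E).
  by apply/measurable_EFinP; exact: measurable_id.
have [zu|uz] := leP u_b z.
- apply: (@le_trans _ _ (\int[pi]_y (cst u_b%:E) y)).
    apply: int_le_ae => //.
    exists [set y | (u_b < y)%R]; split => //; first exact: mlt.
    move=> y /= hy; rewrite ltNge; apply/negP => h; apply: hy => _.
    by rewrite lee_fin.
  rewrite integral_cst //.
  set M := (X in u_b%:E * X); have -> : M = 1 by exact: probability_setT.
  rewrite mule1 lee_fin.
  have : (0 <= (z - u_b) * (1 - eps))%R by apply: mulr_ge0; rewrite subr_ge0.
  lra.
- pose A := [set y : R | (z < y)%R].
  have mA : measurable A by exact: mlt.
  apply: (@le_trans _ _ (\int[pi]_y ((cst z%:E) y + (u_b - z)%:E * (\1_A y)%:E))).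
    apply: int_le_ae => //.
      apply: emeasurable_funD; first exact: measurable_cst.
      apply: emeasurable_funM; first exact: measurable_cst.
      by apply/measurable_EFinP; exact: measurable_indic.
    exists [set y | (u_b < y)%R]; split => //; first exact: mlt.
    move=> y /= hy; rewrite ltNge; apply/negP => h; apply: hy => _.
    rewrite /A indicE; case: (boolP (y \in _)) => [/set_mem yz|yz] /=.
      by rewrite mule1 -EFinD lee_fin; lra.
    rewrite mule0 adde0 lee_fin; move: yz; rewrite notin_setE /= => /negP.
    by rewrite -leNgt.
  rewrite integralD //.
  - rewrite integral_cst //.
    set M := (X in z%:E * X); have -> : M = 1 by exact: probability_setT.
    rewrite mule1 integralZl //; last exact: integrable_indic.
    rewrite integral_indic // setIT.
    set p := (X in (u_b - z)%:E * X).
    have hp : p <= eps%:E by exact: hz.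
    have p0 : 0 <= p by exact: measure_ge0.
    move: p hp p0 => [r| |] //= hr r0.
    + rewrite lee_fin in r0 hr; rewrite -EFinM -EFinD lee_fin.
      move: hr; rewrite lee_fin => hr.
      have : (0 <= (u_b - z) * (eps - r))%R by apply: mulr_ge0; lra.
      nra.
  - exact: finite_measure_integrable_cst.
  - apply: integrableZl => //; exact: (@integrable_indic _ _ _ pi A mA).
Qed.

Lemma setC_gt (R : realType) (t : R) :
  [set y : R | (y <= t)%R] = ~` [set y | (t < y)%R].
Proof.
apply/seteqP; split => y /=; first by rewrite ltNge => ->.
by rewrite ltNge => /negP; rewrite negbK.
Qed.

Lemma le_S (R : realType) (pi : probability R R) (eps t : R) :
  eps%:E < pi [set y | (t < y)%R] ->
  pi [set y : R | (y <= t)%R] <= (1 - eps)%:E.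
Proof.
move=> h; rewrite setC_gt probability_setC; last exact: mlt.
have p1 : pi [set y | (t < y)%R] <= 1 by apply: probability_le1; exact: mlt.
move: (pi _) h p1 => [r| |] //=.
- rewrite !lte_fin lee_fin => h1 h2; rewrite -EFinB lee_fin; lra.
Qed.

Lemma S_mono (R : realType) (pi : probability R R) (t s : R) : (t <= s)%R ->
  pi [set y | (s < y)%R] <= pi [set y | (t < y)%R].
Proof.
move=> ts; apply: le_measure; rewrite ?inE; try exact: mlt.
by move=> y /=; apply: le_lt_trans.
Qed.

Lemma S_prop (R : realType) (pi : probability R R) (u_b eps : R) :
  pi [set y : R | (y <= u_b)%R] = 1 -> (0 <= eps)%R -> (eps <= 1)%R ->
  measurable [set t : R | eps%:E < pi [set y | (t < y)%R]] /\
  pi [set t : R | eps%:E < pi [set y | (t < y)%R]] <= (1 - eps)%:E.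
Proof.
move=> hub e0 e1.
set S := [set t : R | eps%:E < pi [set y | (t < y)%R]].
have down t s : (t <= s)%R -> S s -> S t.
  by move=> ts; rewrite /S /= => h; exact: lt_le_trans h (@S_mono R pi t s ts).
have ubS : ubound S u_b.
  move=> t St; rewrite leNgt; apply/negP => ut.
  have := down _ _ (ltW ut) St; rewrite /S /= (@gt_ub0 R pi u_b hub).
  by rewrite ltNge lee_fin e0.
have [[s0 Ss0]|S0] := pselect (exists s, S s); last first.
  have -> : S = set0.
    by apply/seteqP; split => t // St; apply: S0; exists t.
  by split => //; rewrite measure0 lee_fin; lra.
have hsup : has_sup S by split; [exists s0 | exists u_b].
set c := sup S.
have cub : ubound S c by exact: sup_upper_bound.
have [Sc|nSc] := pselect (S c).
  have -> : S = [set y : R | (y <= c)%R].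
    apply/seteqP; split => t /=; first exact: cub.
    by move=> tc; exact: down tc Sc.
  split; first exact: mle.
  exact: le_S.
pose F := fun n : nat => [set y : R | (y <= c - (n.+1%:R)^-1)%R].
have FS n : S (c - (n.+1%:R)^-1)%R.
  have hn : (0 < (n.+1%:R : R)^-1)%R by rewrite invr_gt0 ltr0Sn.
  have [ee See cee] := sup_adherent hn hsup.
  by apply: down See; apply: ltW.
have SF : S = \bigcup_n F n.
  apply/seteqP; split => t /=.
  - move=> St; have tc : (t < c)%R.
      by rewrite lt_neqAle cub // andbT; apply/eqP => tc; apply: nSc; rewrite -tc.
    have cpos : (0 < c - t)%R by rewrite subr_gt0.
    have ci : (0 <= (c - t)^-1)%R by rewrite invr_ge0 ltW.
    have := archi_boundP ci.
    set n := Num.bound _ => hn.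
    exists n => //; rewrite /F /=.
    have : ((n.+1%:R : R)^-1 < c - t)%R.
      rewrite -[(c - t)%R]invrK ltf_pV2 ?posrE ?invr_gt0 ?ltr0Sn //.
      by apply: lt_le_trans hn _; rewrite ler_nat.
    move: ((n.+1%:R : R)^-1)%R => q h; lra.
  - move=> [n _]; rewrite /F /= => tn; exact: down tn (FS n).
have mF n : measurable (F n) by exact: mle.
have mU : measurable (\bigcup_n F n) by exact: bigcupT_measurable.
split; first by rewrite SF.
have ndF : nondecreasing_seq F.
  apply/nondecreasing_seqP => n; apply/subsetPset; rewrite /F => y /= h; apply: (le_trans h).
  rewrite lerD2l lerN2 lef_pV2 ?posrE ?ltr0Sn // ler_nat; lia.
have := @nondecreasing_cvg_mu _ _ R pi F mF mU ndF.
rewrite -SF => hc; apply: (cvge_to_le hc); apply: nearW => n /=.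
exact: le_S (FS n).
Qed.

Lemma meas_zeta d (Omega : measurableType d) (R : realType) (n : nat)
  (f : 'I_n -> Omega -> R) : (forall i, measurable_fun [set: Omega] (f i)) ->
  measurable_fun [set: Omega] (fun w => \big[Order.max/-oo]_(k < n) (f k w)%:E).
Proof.
elim: n f => [|n IH] f mf.
  under eq_fun do rewrite big_ord0; exact: measurable_cst.
under eq_fun do rewrite big_ord_recr /=.
apply: measurable_maxe.
  by apply: (IH (fun k => f (widen_ord (leqnSn n) k))) => k; exact: mf.
by apply/measurable_EFinP; exact: mf.
Qed.

Local Close Scope ereal_scope.

Theorem theorem5 (R : realType) (pi : probability R R) (u_b : R)
  (hub : pi [set y : R | y <= u_b] = 1%E)
  (d : measure_display) (Omega : measurableType d) (P : probability Omega R)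
  (N : nat) (x : 'I_N -> Omega -> R)
  (hmeas : forall i, measurable_fun setT (x i))
  (hlaw : forall i, has_law P (x i) pi)
  (hind : mutually_independent_RVs P x)
  (eps : R) (heps0 : 0 <= eps) (heps1 : eps <= 1) :
  let zeta := fun w => (\big[Order.max/-oo]_(k < N) (x k w)%:E)%E in
  (P [set w | (\int[pi]_y y%:E <= zeta w * (1 - eps)%:E + (u_b * eps)%:E)%E]
     >= (1 - (1 - eps) ^+ N)%:E)%E.
Proof.
cbv zeta.
have [mS pS] := @S_prop R pi u_b eps hub heps0 heps1.
set S := [set t : R | (eps%:E < pi [set y | (t < y)%R])%E] in mS pS.
set A := [set w | forall i, S (x i w)].
have mA : measurable A.
  rewrite (_ : A = \bigcap_(i in [set: 'I_N]) (x i @^-1` S)).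
    apply: fin_bigcap_measurable; first exact: finite_finset.
    move=> i _.
    by rewrite -(setTI (_ @^-1` _)); exact: hmeas.
  apply/seteqP; split => w /= h i; [move=> _|]; exact: h.
have PA : (P A <= ((1 - eps) ^+ N)%:E)%E.
  rewrite /A (hind (fun=> S) (fun=> mS)).
  under eq_bigr do rewrite (hlaw _ _ mS).
  set p := pi S in pS *.
  have p0 : (0 <= p)%E by exact: measure_ge0.
  move: p pS p0 => [r| |] //= hr r0.
  - rewrite prodEFin lee_fin.
    have -> : ((1 - eps) ^+ N = \prod_(i < N) (1 - eps))%R by rewrite prodr_const card_ord.
    by apply: ler_prod => i _; rewrite -!lee_fin r0 hr.
set T := [set w | _].
have mz := @meas_zeta d Omega R N x hmeas.
have mT : measurable T.
  rewrite -(setTI T); apply: measurable_lee => //.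
  apply: emeasurable_funD; last exact: measurable_cst.
  apply: emeasurable_funM => //; exact: measurable_cst.
have sub : ~` A `<=` T.
  move=> w /= /existsNP [i nS].
  have hle : (pi [set y | (x i w < y)%R] <= eps%:E)%E by rewrite leNgt; apply/negP.
  apply: le_trans (@claimC R pi u_b eps (x i w) hub heps0 heps1 hle) _.
  rewrite EFinD EFinM; apply: leeD => //; apply: lee_wpmul2r.
    by rewrite lee_fin subr_ge0.
  exact: le_bigmax.
apply: (@le_trans _ _ (1 - P A)%E).
  by rewrite EFinB; apply: leeB.
rewrite -probability_setC //; apply: le_measure => //; rewrite inE //.
exact: measurableC.
Qed.
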